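(* There is no matching algorithm that is both incentive compatible with rationality (IC-R) and $\alpha$-optimal for some $\alpha>0$, even when the number of features is $|F|=2$.
   Context: An instance consists of: a set $N$ of students; a set $M$ of colleges, each college $c$ with positive integer capacity $x_c$ and strict preference $\succ_c$ over $N$; a finite set $F$ of features; for each student $s$ and feature $f$ a utility function $u_s^f:M\to[0,1]$; for each student $s$ a probability distribution $\mu_s$ over weight vectors $w_s=(w_s^f)_{f\in F}$ with $w_s^f\ge0$, $\sum_f w_s^f=1$, independent across students. Every college is acceptable to every student and vice versa. For realized $w_s$, $c\succeq_s^{w_s}c'$ iff $\sum_f w_s^fu_s^f(c)\ge\sum_f w_s^fu_s^f(c')$, strict version $\succ_s^{w_s}$; $\mathsf{null}$ (unmatched) is ranked below any college. A matching $\pi$ gives each student at most one college and each college $c$ a set $\pi(c)$ of at most $x_c$ students. Given realized weights, $\pi$ is (weakly) stable if there is no pair $(s,c)$ with $c\succ_s^{w_s}\pi(s)$ and either $|\pi(c)|<x_c$ or some $s'\in\pi(c)$ with $s\succ_c s'$. $\mathsf{ProS}(\pi;\mathcal I)$ is the probability over independent $w_s\sim\mu_s$ that $\pi$ is stable. A matching algorithm $\mathsf{Alg}$ is $\alpha$-optimal if $\inf_{\mathcal I}\mathsf{ProS}(\mathsf{Alg}(\mathcal I);\mathcal I)/\max_\pi\mathsf{ProS}(\pi;\mathcal I)\ge\alpha$. Each student $s$ may misreport $(u_s',\mu_s')$ in place of her true $(\{u_s^f\},\mu_s)$; let $\pi(s)$, $\pi'(s)$ be her assignments under truthful report and misreport.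 The algorithm is IC-R if $\Pr[\pi'(s)\succ_s^{w_s}\pi(s)]>1/2$ never occurs (probability over her true $w_s\sim\mu_s$, with true utilities), for any instance, student and misreport. *)

(* Defs.v *)
From HB Require Import structures.
From mathcomp Require Import all_boot all_order all_algebra.
From mathcomp Require Import fingroup perm reals.
Set Implicit Arguments. Unset Strict Implicit. Unset Printing Implicit Defensive.
Import Order.TTheory GRing.Theory Num.Theory.
Local Open Scope ring_scope.

Definition weight_ok (R : realType) (F : finType) (w : {ffun F -> R}) : bool :=
  [forall f, 0 <= w f] && (\sum_f w f == 1).

(* a probability distribution over weight vectors, given by its atoms
   (probability, weight vector) *)
Definition dist (R : realType) (F : finType) := seq (R * {ffun F -> R}).

Definition dist_ok (R : realType) (F : finType) (d : dist R F) : bool :=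
  all (fun a => (0 <= a.1) && weight_ok a.2) d && (\sum_(a <- d) a.1 == 1).

Definition prob_w (R : realType) (F : finType) (d : dist R F)
  (P : {ffun F -> R} -> bool) : R :=
  \sum_(a <- d) a.1 * (P a.2)%:R.

(* students 'I_n, colleges 'I_m, features F.
   crank c s = rank of student s in the strict preference of college c
   (smaller rank = more preferred). *)
Record instance (R : realType) (n m : nat) (F : finType) := Instance {
  cap : 'I_m -> nat;
  crank : 'I_m -> {perm 'I_n};
  util : 'I_n -> F -> 'I_m -> R;
  mu : 'I_n -> dist R F }.

Definition valid_inst (R : realType) (n m : nat) (F : finType)
  (I : instance R n m F) : Prop :=
  [/\ forall c, (0 < cap I c)%N,
      forall s f c, 0 <= util I s f c <= 1
    & forall s, dist_ok (mu I s)].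

Definition cpref (R : realType) (n m : nat) (F : finType)
  (I : instance R n m F) (c : 'I_m) (s s' : 'I_n) : bool :=
  (crank I c s < crank I c s')%N.

Definition score (R : realType) (n m : nat) (F : finType)
  (I : instance R n m F) (s : 'I_n) (w : {ffun F -> R}) (c : 'I_m) : R :=
  \sum_f w f * util I s f c.

(* strict preference of student s (under weights w) over colleges and null
   (None = unmatched, ranked below every college) *)
Definition spref (R : realType) (n m : nat) (F : finType)
  (I : instance R n m F) (s : 'I_n) (w : {ffun F -> R})
  (o o' : option 'I_m) : bool :=
  match o, o' with
  | Some c, None => true
  | Some c, Some c' => score I s w c' < score I s w c
  | None, _ => false
  end.

Definition matching (n m : nat) := {ffun 'I_n -> option 'I_m}.

Definition load (n m : nat) (pi : matching n m) (c : 'I_m) : nat :=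
  #|[set s | pi s == Some c]|.

Definition is_matching (R : realType) (n m : nat) (F : finType)
  (I : instance R n m F) (pi : matching n m) : bool :=
  [forall c, (load pi c <= cap I c)%N].

Definition blocking (R : realType) (n m : nat) (F : finType)
  (I : instance R n m F) (pi : matching n m) (w : 'I_n -> {ffun F -> R})
  (s : 'I_n) (c : 'I_m) : bool :=
  spref I s (w s) (Some c) (pi s) &&
  ((load pi c < cap I c)%N || [exists s', (pi s' == Some c) && cpref I c s s']).

Definition stable (R : realType) (n m : nat) (F : finType)
  (I : instance R n m F) (pi : matching n m) (w : 'I_n -> {ffun F -> R}) : bool :=
  [forall s, forall c, ~~ blocking I pi w s c].

(* a joint outcome picks one atom of mu_s for every student s *)
Definition profile (R : realType) (n m : nat) (F : finType) (I : instance R n m F) :=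
  {dffun forall s : 'I_n, 'I_(size (mu I s))}.

Definition atom (R : realType) (n m : nat) (F : finType) (I : instance R n m F)
  (s : 'I_n) (i : nat) : R * {ffun F -> R} :=
  nth (0, [ffun=> 0]) (mu I s) i.

Definition ProS (R : realType) (n m : nat) (F : finType)
  (I : instance R n m F) (pi : matching n m) : R :=
  \sum_(p : profile I)
     (\prod_(s : 'I_n) (atom I s (p s)).1) *
     (stable I pi (fun s => (atom I s (p s)).2))%:R.

Definition MaxProS (R : realType) (n m : nat) (F : finType)
  (I : instance R n m F) : R :=
  \big[Num.max/0]_(pi : matching n m | is_matching I pi) ProS I pi.

Definition algorithm (R : realType) :=
  forall n m : nat, instance R n m 'I_2 -> matching n m.

Definition outputs_matchings (R : realType) (Alg : algorithm R) : Prop :=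
  forall n m (I : instance R n m 'I_2), valid_inst I -> is_matching I (Alg n m I).

(* inf_I ProS(Alg I) / max_pi ProS(pi) >= alpha, written without division *)
Definition alpha_optimal (R : realType) (Alg : algorithm R) (alpha : R) : Prop :=
  forall n m (I : instance R n m 'I_2), valid_inst I ->
    alpha * MaxProS I <= ProS I (Alg n m I).

Definition misreport (R : realType) (n m : nat) (F : finType)
  (I : instance R n m F) (s : 'I_n) (u' : F -> 'I_m -> R) (d' : dist R F) :
  instance R n m F :=
  Instance (cap I) (crank I)
    (fun t => if t == s then u' else util I t)
    (fun t => if t == s then d' else mu I t).

Definition IC_R (R : realType) (Alg : algorithm R) : Prop :=
  forall n m (I : instance R n m 'I_2) (s : 'I_n)
    (u' : 'I_2 -> 'I_m -> R) (d' : dist R 'I_2),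
    valid_inst I -> valid_inst (misreport I s u' d') ->
    ~ (1 / 2 < prob_w (mu I s)
         (fun w => spref I s w (Alg n m (misreport I s u' d') s) (Alg n m I s))).

(* Main.v *)
Require Import Defs.
From HB Require Import structures.
From mathcomp Require Import all_boot all_order all_algebra.
From mathcomp Require Import fingroup perm reals.
From mathcomp Require Import lra.
From Stdlib Require Import FunctionalExtensionality.
Import Order.TTheory GRing.Theory Num.Theory.
Local Open Scope ring_scope.

Section S.
Variable R : realType.

Lemma ProS1 (m : nat) (F : finType) cp cr ut (d : dist R F) (pi : matching 1 m) :
  ProS (Instance cp cr ut (fun _ : 'I_1 => d)) pi =
  \sum_(a <- d) a.1 * (stable (Instance cp cr ut (fun _ : 'I_1 => d)) pi (fun _ => a.2))%:R.
Proof.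
rewrite /ProS (big_nth (0, [ffun=> 0])) big_mkord.
set I := Instance _ _ _ _.
rewrite (reindex (fun i : 'I_(size d) => ([ffun => i] : profile I))) /=; last first.
  exists (fun p : profile I => p ord0) => p _ /=; first by rewrite ffunE.
  by apply/ffunP => s; rewrite ffunE (ord1 s).
apply: eq_bigr => i _; rewrite big_ord1 /atom ffunE /=.
congr (_ * (stable _ _ _)%:R).
by apply: functional_extensionality => s; rewrite ffunE.
Qed.

Lemma load1 (m : nat) (F : finType) (I : instance R 1 m F) (pi : matching 1 m) w c :
  spref I ord0 w (Some c) (pi ord0) -> load pi c = 0%N.
Proof.
move=> Hs; apply/eqP; rewrite cards_eq0; apply/eqP/setP => s.
rewrite (ord1 s) !inE; apply/negP => /eqP E; move: Hs; rewrite E /= ltxx.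
by [].
Qed.

Lemma stable1 (m : nat) (F : finType) (I : instance R 1 m F) pi w :
  (forall c, (0 < cap I c)%N) ->
  stable I pi w = [forall c, ~~ spref I ord0 (w ord0) (Some c) (pi ord0)].
Proof.
move=> Hc; apply/idP/idP.
  move=> /forallP /(_ ord0) /forallP H; apply/forallP => c; move: (H c).
  rewrite /blocking; case Hs: (spref _ _ _ _ _) => //.
  by rewrite (@load1 _ _ _ _ _ _ Hs) Hc.
move=> /forallP H; apply/forallP => s; apply/forallP => c'; rewrite (ord1 s) /blocking.
by case Hs: (spref _ _ _ _ _); move: (H c'); rewrite Hs.
Qed.

Lemma scoreE (n m : nat) (I : instance R n m 'I_2) s w c :
  score I s w c = w ord0 * util I s ord0 c + w ord_max * util I s ord_max c.
Proof.
rewrite /score big_ord_recr big_ord1 /=.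
by have -> : widen_ord (m:=2) (leqnSn 1) ord0 = ord0 by apply: val_inj.
Qed.

Definition w0 : {ffun 'I_2 -> R} := [ffun f => if f == ord0 then 1 else 0].
Definition w1 : {ffun 'I_2 -> R} := [ffun f => if f == ord0 then 0 else 1].
Definition wh : {ffun 'I_2 -> R} := [ffun=> 1/2].
Definition u0 (c : 'I_3) : R := if val c == 0%N then 1 else if val c == 1%N then 3/4 else 0.
Definition u1 (c : 'I_3) : R := if val c == 0%N then 0 else if val c == 1%N then 3/4 else 1.
Definition ut : 'I_1 -> 'I_2 -> 'I_3 -> R := fun _ f c => if f == ord0 then u0 c else u1 c.
Definition uu : 'I_2 -> 'I_3 -> R := fun _ c => if val c == 1%N then 1 else 0.
Definition dd (e : R) : dist R 'I_2 := [:: (1/2 - e, w0); (2 * e, wh); (1/2 - e, w1)].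
Definition Ie (e : R) : instance R 1 3 'I_2 :=
  Instance (fun _ => 1%N) (fun _ => 1%g) ut (fun _ => dd e).
Definition I2 (e : R) : instance R 1 3 'I_2 :=
  Instance (fun _ => 1%N) (fun _ => 1%g) (fun _ => uu) (fun _ => dd e).

Lemma misE e : misreport (Ie e) ord0 uu (dd e) = I2 e.
Proof.
rewrite /misreport /Ie /I2 /=; congr Instance.
  by apply: functional_extensionality => t; rewrite (ord1 t).
by apply: functional_extensionality => t; rewrite (ord1 t).
Qed.

Lemma w0E : w0 ord0 = 1 /\ w0 ord_max = 0. Proof. by rewrite !ffunE. Qed.
Lemma w1E : w1 ord0 = 0 /\ w1 ord_max = 1. Proof. by rewrite !ffunE. Qed.
Lemma whE : wh ord0 = 1/2 /\ wh ord_max = 1/2. Proof. by rewrite !ffunE. Qed.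

Lemma scI e w c : score (Ie e) ord0 w c = w ord0 * u0 c + w ord_max * u1 c.
Proof. by rewrite scoreE. Qed.

Lemma scI2 e w c : score (I2 e) ord0 w c = (w ord0 + w ord_max) * (if val c == 1%N then 1 else 0).
Proof. by rewrite scoreE /= mulrDl. Qed.


Definition cX : 'I_3 := @Ordinal 3 0 isT.
Definition cY : 'I_3 := @Ordinal 3 1 isT.
Definition cZ : 'I_3 := @Ordinal 3 2 isT.


Ltac ev := rewrite ?scI ?scI2 /u0 /u1 !ffunE /=.
Ltac tr := apply/forallP; case => [[|[|[|k]]] Hk'] //=; ev; rewrite -leNgt; lra.
Ltac fl w := apply/negbTE/forallPn; exists w; rewrite negbK /=; first [done | ev; lra].
Ltac nonecase := match goal with |- _ = (None == Some ?x) =>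
  rewrite (_ : (None == Some x) = false) //; apply/negbTE/forallPn; by exists cX end.
Ltac stab p := rewrite stable1 //; case: (p ord0) => [[[|[|[|k]]] Hk]|] //=;
  first [nonecase | tr | fl cX | fl cY | fl cZ].

Lemma stI_w0 e (pi : matching 1 3) : stable (Ie e) pi (fun _ => w0) = (pi ord0 == Some cX).
Proof. rewrite stable1 //; case: (pi ord0) => [[[|[|[|k]]] Hk]|] //=. all: try (first [tr | fl cX | fl cY | fl cZ]). rewrite (_ : (None == Some cX) = false) //. apply/negbTE/forallPn; by exists cX. Qed.
Lemma stI_w1 e (pi : matching 1 3) : stable (Ie e) pi (fun _ => w1) = (pi ord0 == Some cZ).
Proof. stab pi. Qed.
Lemma stI_wh e (pi : matching 1 3) : stable (Ie e) pi (fun _ => wh) = (pi ord0 == Some cY).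
Proof. stab pi. Qed.
Lemma stI2_w0 e (pi : matching 1 3) : stable (I2 e) pi (fun _ => w0) = (pi ord0 == Some cY).
Proof. stab pi. Qed.
Lemma stI2_w1 e (pi : matching 1 3) : stable (I2 e) pi (fun _ => w1) = (pi ord0 == Some cY).
Proof. stab pi. Qed.
Lemma stI2_wh e (pi : matching 1 3) : stable (I2 e) pi (fun _ => wh) = (pi ord0 == Some cY).
Proof. stab pi. Qed.

Ltac evb := repeat match goal with |- context [ (nat_of_bool (?x < ?y))%:R ] =>
  first [ rewrite (_ : (x < y) = true); last by lra
        | rewrite (_ : (x < y) = false); last by (apply/negbTE; rewrite -leNgt; lra) ] end.

Lemma ProS_I e (pi : matching 1 3) : ProS (Ie e) pi =
  (1/2 - e) * (pi ord0 == Some cX)%:R + 2 * e * (pi ord0 == Some cY)%:R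
  + (1/2 - e) * (pi ord0 == Some cZ)%:R.
Proof.
rewrite /Ie ProS1 !big_cons big_nil -/(Ie e) stI_w0 stI_wh stI_w1 /=.
by rewrite addr0 addrA.
Qed.

Lemma ProS_I2 e (pi : matching 1 3) : ProS (I2 e) pi = (pi ord0 == Some cY)%:R.
Proof.
rewrite /I2 ProS1 !big_cons big_nil -/(I2 e) stI2_w0 stI2_wh stI2_w1 /=.
case: (_ == _) => /=; lra.
Qed.

Lemma matching_ok (I : instance R 1 3 'I_2) (pi : matching 1 3) :
  (forall c, cap I c = 1%N) -> is_matching I pi.
Proof.
move=> Hc; apply/forallP => c; rewrite Hc /load.
by rewrite (leq_trans (max_card _)) ?card_ord.
Qed.

Lemma MaxP (I : instance R 1 3 'I_2) (pi : matching 1 3) :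
  (forall c, cap I c = 1%N) -> ProS I pi <= MaxProS I.
Proof.
move=> Hc; rewrite /MaxProS.
by apply: le_bigmax_cond; apply: matching_ok.
Qed.

Lemma validI e : 0 <= e <= 1/4 -> valid_inst (Ie e).
Proof.
move=> /andP [He0 He1]; split => //.
  move=> s f c; rewrite /= /ut.
  case: f => [[|[|k]] Hf] //=; case: c => [[|[|[|k]]] Hc] //=; rewrite /u0 /u1 /=; apply/andP; split; lra.
rewrite /dist_ok /= /weight_ok !big_cons big_nil /= !big_ord_recr !big_ord0 /= !ffunE /=.
move=> _.
have fw0 : [forall f, 0 <= w0 f] by apply/forallP => f; rewrite ffunE; case: ifP => _; lra.
have fw1 : [forall f, 0 <= w1 f] by apply/forallP => f; rewrite ffunE; case: ifP => _; lra.
have fwh : [forall f, 0 <= wh f] by apply/forallP => f; rewrite ffunE; lra.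
rewrite fw0 fw1 fwh /=.
repeat (apply/andP; split); try done; first [lra | (apply/eqP; lra)].
Qed.

Lemma validI2 e : 0 <= e <= 1/4 -> valid_inst (I2 e).
Proof.
move=> He; have [_ _ H] := validI e He; split => //.
move=> s f c; rewrite /= /uu; case: ifP => _; apply/andP; split; lra.
Qed.

Lemma probX e : prob_w (dd e) (fun w => spref (Ie e) ord0 w (Some cY) (Some cX)) = 2 * e + (1/2 - e).
Proof. rewrite /prob_w !big_cons big_nil /= !scI /u0 /u1 !ffunE /=; evb; rewrite /=; lra. Qed.
Lemma probZ e : prob_w (dd e) (fun w => spref (Ie e) ord0 w (Some cY) (Some cZ)) = 2 * e + (1/2 - e).
Proof. rewrite /prob_w !big_cons big_nil /= !scI /u0 /u1 !ffunE /=; evb; rewrite /=; lra. Qed.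
End S.
Arguments w0 {R}. Arguments w1 {R}. Arguments wh {R}. Arguments u0 {R}. Arguments u1 {R}.
Arguments ut {R}. Arguments uu {R}. Arguments dd {R}. Arguments Ie {R}. Arguments I2 {R}.
Arguments validI {R}. Arguments validI2 {R}. Arguments MaxP {R}.

Theorem theorem2 (R : realType) (Alg : algorithm R) :
  outputs_matchings Alg -> IC_R Alg ->
  ~ (exists alpha : R, 0 < alpha /\ alpha_optimal Alg alpha).
Proof.
move=> Hm Hic [a [Ha Hopt]].
have [mm [Hm0 Hm1 Hma]] : exists mm : R, [/\ 0 < mm, mm <= 1 & mm <= a].
  have [H1|H1] := leP a 1; first by exists a; split => //; lra.
  by exists 1; split => //; lra.
pose e := mm / 8.
have He : 0 <= e <= 1/4 by apply/andP; split; rewrite /e; lra.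
have He0 : 0 < e by rewrite /e; lra.
have Hkey : 2 * e < a * (1/2 - e) by rewrite /e; nra.
have vI := validI e He.
have vI2 := validI2 e He.
have vM : valid_inst (misreport (Ie e) ord0 (@uu R) (dd e)) by rewrite misE.
have HIC := Hic 1%N 3%N (Ie e) ord0 (@uu R) (dd e) vI vM.
rewrite misE in HIC.
have cap1 : forall (I : instance R 1 3 'I_2), cap I = (fun _ => 1%N) -> forall c, cap I c = 1%N.
  by move=> I -> c.
have HY : Alg 1%N 3%N (I2 e) ord0 = Some cY.
  have := Hopt _ _ (I2 e) vI2.
  have := MaxP _ ([ffun=> Some cY] : matching 1 3) (cap1 (I2 e) erefl).
  rewrite !ProS_I2 ffunE eqxx /=.
  case: eqP => // _ /= H1 H2; exfalso; nra.
have HXZ : Alg 1%N 3%N (Ie e) ord0 = Some cX \/ Alg 1%N 3%N (Ie e) ord0 = Some cZ.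
  have := Hopt _ _ (Ie e) vI.
  have := MaxP _ ([ffun=> Some cX] : matching 1 3) (cap1 (Ie e) erefl).
  rewrite !ProS_I ffunE /=.
  case: (Alg 1%N 3%N (Ie e) ord0) => [[[|[|[|k]]] Hk]|] //=; try by [left; congr Some; apply: val_inj | right; congr Some; apply: val_inj].
  all: try (move=> H1 H2; exfalso; nra).
apply HIC; rewrite HY.
case: HXZ => ->; [rewrite probX | rewrite probZ]; lra.
Qed.
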